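(* Let $G=(X,Y,E)$ be a bipartite graph with non-negative weights $\omega_e$ on its edges $e\in E$. Suppose that for all $x\in X$ and all $y\in Y$, $$\sum_{e\in\delta_G(x)}\omega_e=\frac{1}{|X|}\qquad\text{and}\qquad\sum_{e\in\delta_G(y)}\omega_e=\frac{1}{|Y|}.$$ Then for any subset $Y'\subseteq Y$ of size $\left\lceil\frac{|Y|-|X|}{|X|}\right\rceil$, there exists a matching in $G$ covering every vertex of $X$ and covering no vertex of $Y'$.
   Context: $\delta_G(z)$ denotes the set of edges of $G$ incident to the vertex $z$.
   Formalization: The bipartite graph is also assumed to satisfy |X| ≤ |Y|, a condition that the two conditions on the weight sums at the vertices do not imply. The statement above fails without it. *)

(* Defs.v *)
From HB Require Import structures.
From mathcomp Require Import all_boot all_order all_algebra.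
Set Implicit Arguments. Unset Strict Implicit. Unset Printing Implicit Defensive.
Import Order.TTheory GRing.Theory Num.Theory.
Local Open Scope ring_scope.

(* A bipartite graph G = (X, Y, E) is given by two finite vertex classes
   (types) X, Y and an edge set E : {set X * Y}; the edge (x, y) joins x and y. *)

Definition deltaX (X Y : finType) (E : {set X * Y}) (x : X) : {set X * Y} :=
  [set e in E | e.1 == x].
Definition deltaY (X Y : finType) (E : {set X * Y}) (y : Y) : {set X * Y} :=
  [set e in E | e.2 == y].

Definition is_matching (X Y : finType) (E M : {set X * Y}) : Prop :=
  M \subset E /\
  forall e1 e2, e1 \in M -> e2 \in M -> e1 != e2 -> (e1.1 != e2.1) && (e1.2 != e2.2).

Definition coversX (X Y : finType) (M : {set X * Y}) (x : X) : Prop :=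
  exists2 e, e \in M & e.1 = x.
Definition coversY (X Y : finType) (M : {set X * Y}) (y : Y) : Prop :=
  exists2 e, e \in M & e.2 = y.

(* Main.v *)
Require Import Defs.
From HB Require Import structures.
From mathcomp Require Import all_boot all_order all_algebra.
From mathcomp Require Import zify ring lra.
Import Order.TTheory GRing.Theory Num.Theory.
Set Implicit Arguments. Unset Strict Implicit.


Definition Nb (X Y : finType) (adj : X -> Y -> bool) (S : {set X}) (B : {set Y}) : {set Y} :=
  [set y in B | [exists x in S, adj x y]].

Lemma inNb (X Y : finType) (adj : X -> Y -> bool) S B y :
  (y \in Nb adj S B) = (y \in B) && [exists x in S, adj x y].
Proof. by rewrite inE. Qed.

Lemma hall (X Y : finType) (y0 : Y) (adj : X -> Y -> bool) n :
  forall (A : {set X}) (B : {set Y}), (#|A| <= n)%N ->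
  (forall S : {set X}, S \subset A -> (#|S| <= #|Nb adj S B|)%N) ->
  exists f : X -> Y, {in A &, injective f} /\
    forall x, x \in A -> adj x (f x) && (f x \in B).
Proof.
elim: n => [|n IH] A B hA hH.
  have A0 : A = set0 by apply/eqP; rewrite -cards_eq0 -leqn0.
  by exists (fun _ => y0); rewrite A0; split => [x|x]; rewrite inE.
case: (boolP [exists S : {set X}, [&& S \subset A, S != set0, S != A &
          (#|Nb adj S B| <= #|S|)%N]]).
  case/existsP => S0 /and4P [sA n0 nA hS0].
  have pA : S0 \proper A by rewrite properEneq nA sA.
  have cS0 : (#|S0| <= n)%N by have := proper_card pA; lia.
  have [f1 [inj1 h1]] := IH S0 B cS0
     (fun S sS => hH S (subset_trans sS sA)).
  have c2 : (#|A :\: S0| <= n)%N.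
    have := cardsD A S0; rewrite (setIidPr sA).
    have := subset_leq_card sA; move: n0; rewrite -card_gt0; lia.
  have H2 : forall T : {set X}, T \subset A :\: S0 ->
      (#|T| <= #|Nb adj T (B :\: Nb adj S0 B)|)%N.
    move=> T sT.
    have TS0 : T :&: S0 = set0.
      apply/setP => x; rewrite !inE; apply/negbTE/andP => -[xT xS].
      by have := subsetP sT x xT; rewrite !inE xS.
    have hU : (#|T :|: S0| <= #|Nb adj (T :|: S0) B|)%N.
      by apply: hH; rewrite subUset sA (subset_trans sT (subsetDl A S0)).
    have sub : Nb adj (T :|: S0) B \subset Nb adj T (B :\: Nb adj S0 B) :|: Nb adj S0 B.
      apply/subsetP => y; rewrite !inNb => /andP [yB /existsP [x /andP [xTS axy]]].
      rewrite inE; case: (boolP (y \in Nb adj S0 B)) => yN; first by rewrite orbT.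
      rewrite orbF inNb inE yN yB /=.
      rewrite inE in xTS; case/orP: xTS => [xT|xS].
        by apply/existsP; exists x; rewrite xT axy.
      move/negP: yN => []; rewrite inNb yB; apply/existsP; exists x; by rewrite xS axy.
    have := subset_leq_card sub; rewrite cardsU.
    have := cardsU T S0; rewrite TS0 cards0.
    have := hS0; lia.
  have [f2 [inj2 h2]] := IH _ _ c2 H2.
  have h2' : forall x, x \in A -> x \notin S0 ->
      [&& adj x (f2 x), f2 x \in B & f2 x \notin Nb adj S0 B].
    move=> x xA xS; have := h2 x; rewrite !inE xA xS => /(_ isT) /andP [-> /andP [-> ->]].
    by [].
  have h1N : forall x, x \in S0 -> f1 x \in Nb adj S0 B.
    move=> x xS; have /andP [a b] := h1 x xS; rewrite inNb b /=.
    by apply/existsP; exists x; rewrite xS a.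
  exists (fun x => if x \in S0 then f1 x else f2 x); split.
    move=> x x' xA x'A /=.
    case xS: (x \in S0); case x'S: (x' \in S0).
    - exact: inj1.
    - move=> e; have := h2' x' x'A; rewrite x'S => /(_ isT) /and3P [_ _].
      by rewrite -e h1N.
    - move=> e; have := h2' x xA; rewrite xS => /(_ isT) /and3P [_ _].
      by rewrite e h1N.
    - apply: inj2; by rewrite inE ?xS ?x'S.
  move=> x xA /=; case xS: (x \in S0); first exact: h1.
  by have := h2' x xA; rewrite xS => /(_ isT) /and3P [-> ->].
move/existsPn => hnot.
have hN : forall S : {set X}, S \subset A -> S != set0 -> S != A ->
    (#|S| < #|Nb adj S B|)%N.
  by move=> S sA n0 nA; have := hnot S; rewrite sA n0 nA /= ltnNge.
case: (set_0Vmem A) => [A0|[x0 x0A]].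
  by exists (fun _ => y0); rewrite A0; split => [x|x]; rewrite inE.
have : (0 < #|Nb adj [set x0] B|)%N.
  by have := hH [set x0]; rewrite sub1set x0A cards1 => /(_ isT).
rewrite card_gt0 => /set0Pn [y]; rewrite inNb => /andP [yB /existsP [x1 /andP]].
rewrite inE => -[/eqP -> ax0y].
have c2 : (#|A :\ x0| <= n)%N by have := cardsD1 x0 A; rewrite x0A; lia.
have H2 : forall T : {set X}, T \subset A :\ x0 ->
    (#|T| <= #|Nb adj T (B :\ y)|)%N.
  move=> T sT; case: (set_0Vmem T) => [->|[t tT]]; first by rewrite cards0.
  have sTA : T \subset A := subset_trans sT (subsetDl A _).
  have x0T : x0 \notin T.
    by apply/negP => /(subsetP sT); rewrite !inE eqxx.
  have := hN T sTA _ _.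
  have sub : Nb adj T B \subset Nb adj T (B :\ y) :|: [set y].
    apply/subsetP => z; rewrite !inE; case: (z =P y) => //= _.
    by rewrite orbF.
  have := subset_leq_card sub; rewrite cardsU cards1.
  have tn : T != set0 by apply/set0Pn; exists t.
  have tA : T != A by apply/eqP => TA; move: x0T; rewrite TA x0A.
  move=> h1 /(_ tn tA) h2; lia.
have [f' [inj' h']] := IH _ _ c2 H2.
have h'' : forall x, x \in A -> x != x0 -> [&& adj x (f' x), f' x \in B & f' x != y].
  move=> x xA xn; have := h' x; rewrite !inE xA xn => /(_ isT) /andP [-> /andP [-> ->]].
  by [].
exists (fun x => if x == x0 then y else f' x); split.
  move=> x x' xA x'A /=.
  case: (x =P x0) => [->|xn]; case: (x' =P x0) => [->|x'n] //.
  - move=> e; have := h'' x' x'A; move/eqP: x'n => -> /(_ isT) /and3P [_ _].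
    by rewrite e eqxx.
  - move=> e; have := h'' x xA; move/eqP: xn => -> /(_ isT) /and3P [_ _].
    by rewrite e eqxx.
  - apply: inj'; rewrite !inE ?xA ?x'A ?andbT; apply/eqP; assumption.
move=> x xA /=; case: (x =P x0) => [->|xn]; first by rewrite ax0y yB.
by have := h'' x xA; move/eqP: xn => -> /(_ isT) /and3P [-> ->].
Qed.

Local Open Scope ring_scope.

Theorem lemma2p9 (R : realFieldType) (X Y : finType) (E : {set X * Y})
    (w : X * Y -> R)
    (hw : forall e, e \in E -> 0 <= w e)
    (hX : forall x : X, \sum_(e in deltaX E x) w e = 1 / (#|X|%:R))
    (hY : forall y : Y, \sum_(e in deltaY E y) w e = 1 / (#|Y|%:R))
    (hXY : (#|X| <= #|Y|)%N)
    (Y' : {set Y})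
    (hY' : #|Y'|%:Z =
           Num.ceil (((#|Y|%:R - #|X|%:R) / #|X|%:R) : rat)) :
  exists M : {set X * Y},
    [/\ is_matching E M,
        forall x : X, coversX M x
      & forall y : Y, y \in Y' -> ~ coversY M y].
Proof.
case: (pickP (@predT X)) => [x0 _ | X0]; last first.
  exists set0; split.
  - by split; [exact: sub0set | move=> e1 e2; rewrite inE].
  - by move=> x; have := X0 x.
  - by move=> y _ [e]; rewrite inE.
have aP : (0 < #|X|)%N by apply/card_gt0P; exists x0.
have bP : (0 < #|Y|)%N by apply: leq_trans hXY.
have [y0 _] : exists y0 : Y, y0 \in Y by apply/card_gt0P.
pose adj := fun (x : X) (y : Y) => (x, y) \in E.
set k := #|Y'|.
have hk : (k * #|X| < #|Y|)%N.
  have := ceilB1_lt (((#|Y|%:R - #|X|%:R) / #|X|%:R) : rat).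
  rewrite -hY' intrB ltr_pdivlMr ?ltr0n // => h.
  have : ((k * #|X|)%:R : rat) < (#|Y|)%:R by rewrite natrM; nra.
  by rewrite ltr_nat.
have hw1 : forall S : {set X},
    (#|S| * #|Y| <= #|Nb adj S setT| * #|X|)%N.
  move=> S.
  have L : \sum_(e | (e \in E) && (e.1 \in S)) w e = #|S|%:R * (1 / #|X|%:R).
    rewrite (partition_big (fun e : X * Y => e.1) (fun x => x \in S)); last first.
      by move=> e /andP [].
    rewrite mulr_natl -sumr_const; apply: eq_bigr => x xS.
    rewrite -(hX x); apply: eq_bigl => e; rewrite !inE.
    by case: eqP => [->|]; rewrite ?xS ?andbT ?andbF.
  have Rr : \sum_(e | (e \in E) && (e.2 \in Nb adj S setT)) w e
            = #|Nb adj S setT|%:R * (1 / #|Y|%:R).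
    rewrite (partition_big (fun e : X * Y => e.2) (fun y => y \in Nb adj S setT)); last first.
      by move=> e /andP [].
    rewrite mulr_natl -sumr_const; apply: eq_bigr => y yN.
    rewrite -(hY y); apply: eq_bigl => e; rewrite [in RHS]inE.
    by case: eqP => [->|]; rewrite ?yN ?andbT ?andbF.
  have le : \sum_(e | (e \in E) && (e.1 \in S)) w e <=
            \sum_(e | (e \in E) && (e.2 \in Nb adj S setT)) w e.
    rewrite [X in X <= _]big_mkcond [X in _ <= X]big_mkcond /=.
    apply: ler_sum => e _.
    case hE: (e \in E) => //=.
    case h1: (e.1 \in S).
      have -> : e.2 \in Nb adj S setT.
        rewrite inNb inE /=; apply/existsP; exists e.1; rewrite h1 /adj.
        by case: e hE h1 => ? ?.
      by [].
    by case: ifP => _; [exact: hw|].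
  move: le; rewrite L Rr !div1r ler_pdivrMr ?ltr0n // mulrAC ler_pdivlMr ?ltr0n //.
  by rewrite -!natrM ler_nat.
have hH : forall S : {set X}, S \subset setT -> (#|S| <= #|Nb adj S (~: Y')|)%N.
  move=> S _.
  have sub : Nb adj S setT \subset Nb adj S (~: Y') :|: Y'.
    apply/subsetP => y; rewrite !inNb !inE /=.
    by case: (y \in Y') => //=; rewrite orbF.
  have := subset_leq_card sub; rewrite cardsU.
  have := hw1 S.
  case: (set_0Vmem S) => [->|[s sS]]; first by rewrite cards0.
  have : (0 < #|S|)%N by apply/card_gt0P; exists s.
  rewrite -/k; move: hk hXY aP.
  set a := #|X|; set b := #|Y|; set sN := #|S|; set N := #|Nb adj S setT|;
    set m := #|Nb adj S (~: Y')|; set i := #|_ :&: _|.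
  nia.
have [f [finj hf]] := @hall X Y y0 adj _ setT (~: Y') (leqnn _) hH.
exists [set e : X * Y | e.2 == f e.1]; split.
- split.
    apply/subsetP => -[x y]; rewrite inE /= => /eqP ->.
    by have /andP [] := hf x (in_setT x).
  move=> [x1 y1] [x2 y2]; rewrite !inE /= => /eqP -> /eqP -> ne.
  have nx : x1 != x2 by apply: contraNneq ne => ->.
  rewrite nx /=; apply: contraNneq nx => e.
  by apply/eqP; apply: finj; rewrite ?in_setT.
- by move=> x; exists (x, f x); rewrite // inE.
- move=> y yY [[x y'] ]; rewrite inE /= => /eqP -> /= e.
  have /andP [_] := hf x (in_setT x).
  by rewrite e inE yY.
Qed.
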